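(* Let $\bm{N}=(N_0,\ldots,N_{n-1},-\sum_iN_i)$ and $\bm{M}=(M_0,\ldots,M_{n-1},-\sum_iM_i)$ with all $N_i,M_i\in\mathbb{Z}_{\ge0}$, and suppose $\sum_{i=0}^kN_i\ge\sum_{i=0}^kM_i$ for every $k=0,\ldots,n-1$. Then $K_n(\bm{N})\ge K_n(\bm{M})$.
   Context: $K_n(\bm{N})$ is the number of integer vectors $(f_{ij})_{0\le i<j\le n}\in\mathbb{Z}_{\ge0}^{\binom{n+1}{2}}$ with $\sum_{j>i} f_{ij}-\sum_{k<i} f_{ki}=N_i$ for every $i\in\{0,\ldots,n\}$. *)

(* Defs.v *)
From HB Require Import structures.
From mathcomp Require Import all_boot all_order all_algebra.
From mathcomp Require Import finmap.
From mathcomp Require Import boolp classical_sets cardinality.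
Set Implicit Arguments. Unset Strict Implicit. Unset Printing Implicit Defensive.
Import Order.TTheory GRing.Theory Num.Theory.
Local Open Scope ring_scope.

(* A flow vector (f_ij)_{0<=i<j<=n} of nonnegative integers, encoded as a finite
   function on pairs of indices in {0..n} that vanishes off the set {i < j}. *)
Definition flow_vec (n : nat) := {ffun 'I_n.+1 * 'I_n.+1 -> nat}.

Definition is_flow (n : nat) (N : 'I_n.+1 -> int) (f : flow_vec n) : Prop :=
  (forall i j : 'I_n.+1, ~~ (i < j)%N -> f (i, j) = 0%N) /\
  (forall i : 'I_n.+1,
      ((\sum_(j < n.+1 | (i < j)%N) (f (i, j))%:Z)
       - (\sum_(k < n.+1 | (k < i)%N) (f (k, i))%:Z))%R = N i).

Definition K (n : nat) (N : 'I_n.+1 -> int) : nat :=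
  #|` fset_set [set f : flow_vec n | is_flow N f] |.

(* (N_0, ..., N_{n-1}, - sum_i N_i) *)
Definition ext_vec (n : nat) (N : 'I_n -> nat) : 'I_n.+1 -> int :=
  fun i => match @insub nat (fun k => (k < n)%N) 'I_n (val i) with
           | Some i' => (N i')%:Z
           | None => - (\sum_(i' < n) (N i')%:Z)
           end.

(* Main.v *)
Require Import Defs.
From HB Require Import structures.
From mathcomp Require Import all_boot all_order all_algebra.
From mathcomp Require Import finmap.
From mathcomp Require Import boolp classical_sets cardinality.
From mathcomp Require Import zify.
Import Order.TTheory GRing.Theory Num.Theory.

Section Aux.
Local Open Scope ring_scope.
Local Set Implicit Arguments.
Local Unset Strict Implicit.
Lemma flow_bound n (N' : 'I_n.+1 -> int) (f : flow_vec n) : is_flow N' f ->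
  forall p, (f p)%:Z <= - \sum_(i < n.+1) (i%:Z) * N' i.
Proof.
move=> [f0 df] [a0 b0].
have drop1 (i : 'I_n.+1) : \sum_(j < n.+1 | (i < j)%N) (f (i,j))%:Z = \sum_(j < n.+1) (f(i,j))%:Z.
  by rewrite [RHS](bigID (fun j : 'I_n.+1 => (i < j)%N)) /= [X in _ + X]big1 ?addr0 // => j /f0 ->.
have drop2 (i : 'I_n.+1) : \sum_(k < n.+1 | (k < i)%N) (f (k,i))%:Z = \sum_(k < n.+1) (f(k,i))%:Z.
  by rewrite [RHS](bigID (fun k : 'I_n.+1 => (k < i)%N)) /= [X in _ + X]big1 ?addr0 // => k /f0 ->.
have key : \sum_(i < n.+1) (i%:Z) * N' i =
   - \sum_(a < n.+1) \sum_(b < n.+1) (b%:Z - a%:Z) * (f (a,b))%:Z.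
  under eq_bigr => i _ do rewrite -df drop1 drop2 mulrBr !mulr_sumr.
  rewrite sumrB [X in _ - X]exchange_big /= -sumrB -sumrN.
  apply: eq_bigr => a _; rewrite -sumrB -sumrN; apply: eq_bigr => b _.
  by rewrite mulrBl opprB.
rewrite key opprK.
have T (a b : 'I_n.+1) : (f (a,b))%:Z <= (b%:Z - a%:Z) * (f (a,b))%:Z.
  case: (ltnP a b) => ab.
    rewrite -[X in X <= _]mul1r ler_wpM2r //; lia.
  by rewrite f0 ?mulr0 // -leqNgt.
apply: (le_trans (T a0 b0)).
rewrite (bigD1 a0) //= (bigD1 b0) //= -addrA lerDl.
apply: addr_ge0; apply: sumr_ge0 => i _; [|apply: sumr_ge0 => j _];
  exact: le_trans (T _ _).
Qed.


Lemma flow_finite n (N' : 'I_n.+1 -> int) :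
  finite_set [set f : flow_vec n | is_flow N' f].
Proof.
set B := `|- \sum_(i < n.+1) (i%:Z) * N' i|%N.
apply: (@sub_finite_set _ _
  (range (fun g : {ffun 'I_n.+1 * 'I_n.+1 -> 'I_B.+1} => [ffun p => val (g p)] : flow_vec n))).
  move=> f /= Hf; exists [ffun p => inord (f p)] => //.
  apply/ffunP => p; rewrite !ffunE inordK //.
  have := @flow_bound _ _ _ Hf p; rewrite /B; lia.
by apply: finite_image; exact: finite_finset.
Qed.


Lemma prefix_le n (N M : 'I_n -> nat) :
  (forall k : 'I_n, (\sum_(i < n | (i <= k)%N) M i <= \sum_(i < n | (i <= k)%N) N i)%N) ->
  forall i, (\sum_(k < n | (k < i)%N) M k <= \sum_(k < n | (k < i)%N) N k)%N.
Proof.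
move=> H [|i]; first by rewrite !big_pred0.
case: (ltnP i n) => hi.
  have := H (Ordinal hi).
  have E : forall k : 'I_n, (k <= Ordinal hi)%N = (k < i.+1)%N by [].
  by rewrite (eq_bigl _ _ E) (eq_bigl _ _ E).
case: n N M H hi => [|m] N M H hi; first by rewrite !big_ord0.
have := H ord_max.
have E : forall k : 'I_m.+1, (k <= @ord_max m)%N = (k < i.+1)%N.
  move=> k; have := ltn_ord k; rewrite /= ltnS => km; apply/idP/idP => _.
    by rewrite ltnS; exact: leq_trans km (ltnW hi).
  by rewrite -ltnS.
by rewrite (eq_bigl _ _ E) (eq_bigl _ _ E).
Qed.
Lemma sum_split n (F : 'I_n -> nat) (i' : 'I_n) :
  (\sum_(k < n | (k < i'.+1)%N) F k = \sum_(k < n | (k < i')%N) F k + F i')%N.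
Proof.
rewrite (bigD1 i') /= ?ltnSn // addnC; congr (_ + _); apply: eq_bigl => k.
by rewrite ltnS ltn_neqAle andbC.
Qed.

Definition dd n (N M : 'I_n -> nat) (i : nat) : nat :=
  (\sum_(k < n | (k < i)%N) N k - \sum_(k < n | (k < i)%N) M k)%N.

Definition hh n (N M : 'I_n -> nat) : flow_vec n :=
  [ffun p : 'I_n.+1 * 'I_n.+1 => if ((p.1 : nat).+1 == p.2) then dd N M p.2 else 0%N].

Lemma h_out n (N M : 'I_n -> nat) (i : 'I_n.+1) :
  \sum_(j < n.+1 | (i < j)%N) (hh N M (i,j))%:Z = if (i < n)%N then (dd N M i.+1)%:Z else 0.
Proof.
transitivity (\sum_(j < n.+1) (if ((j : nat) == i.+1) then (dd N M i.+1)%:Z else 0)).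
  rewrite [RHS](bigID (fun j : 'I_n.+1 => (i < j)%N)) /= [X in _ + X]big1 ?addr0.
    apply: eq_bigr => j _; rewrite ffunE /= eq_sym; by case: eqP => // ->.
  by move=> j ij; case: eqP => // E; rewrite E ltnSn in ij.
case: ltnP => hi.
  rewrite (bigD1 (Ordinal (hi : (i.+1 < n.+1)%N))) //= eqxx big1 ?addr0 //.
  move=> j jne; case: eqP => // E; move: jne.
  by rewrite -(inj_eq val_inj) /= E eqxx.
apply: big1 => j _; case: eqP => // E; have := ltn_ord j; rewrite E; lia.
Qed.

Lemma h_in n (N M : 'I_n -> nat) (i : 'I_n.+1) :
  \sum_(k < n.+1 | (k < i)%N) (hh N M (k,i))%:Z = (dd N M i)%:Z.
Proof.
transitivity (\sum_(k < n.+1) (if ((k : nat).+1 == i) then (dd N M i)%:Z else 0)).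
  rewrite [RHS](bigID (fun k : 'I_n.+1 => (k < i)%N)) /= [X in _ + X]big1 ?addr0.
    by apply: eq_bigr => k _; rewrite ffunE /=; case: eqP.
  by move=> k ki; case: eqP => // E; rewrite -E ltnSn in ki.
case: i => [[|i'] hi] /=.
  rewrite big1 /dd; last by move=> k _.
  by rewrite !big_pred0.
have hi' : (i' < n.+1)%N by lia.
rewrite (bigD1 (Ordinal hi')) //= eqxx big1 ?addr0 //.
move=> k kne; case: eqP => // E; move: kne.
by rewrite -(inj_eq val_inj) /=; case: E => ->; rewrite eqxx.
Qed.

Lemma ext_diff n (N M : 'I_n -> nat) :
  (forall k : 'I_n, (\sum_(i < n | (i <= k)%N) M i <= \sum_(i < n | (i <= k)%N) N i)%N) ->
  forall i : 'I_n.+1,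
  ext_vec N i = ext_vec M i + (if (i < n)%N then (dd N M i.+1)%:Z else 0) - (dd N M i)%:Z.
Proof.
move=> H i; have P := prefix_le H; rewrite /ext_vec /dd.
case: insubP => [i' Hi Ei | Hi].
  have Hi2 : (i < n)%N := Hi; have Ei2 : (i' : nat) = i := Ei.
  rewrite Hi2 -Ei2 !sum_split.
  have := P i'; have := P i'.+1; rewrite !sum_split; lia.
have Hi2 : ~~ (i < n)%N := Hi.
rewrite (negbTE Hi2) addr0.
have ni : (n <= i)%N by rewrite leqNgt.
have E : forall k : 'I_n, (k < i)%N = true by move=> k; exact: leq_trans (ltn_ord k) ni.
have e1 : forall F : 'I_n -> nat, (\sum_(k < n | (k < i)%N) F k = \sum_(k < n) F k)%N.
  by move=> F; apply: eq_bigl.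
have m : forall F : 'I_n -> nat, \sum_(k < n) (F k)%:Z = (\sum_(k < n) F k)%N%:Z.
  by move=> F; rewrite (big_morph Posz PoszD (erefl (Posz 0))).
have := P i; rewrite !m !e1.
lia.
Qed.


Lemma g_flow n (N M : 'I_n -> nat) :
  (forall k : 'I_n, (\sum_(i < n | (i <= k)%N) M i <= \sum_(i < n | (i <= k)%N) N i)%N) ->
  forall f : flow_vec n, is_flow (ext_vec M) f ->
  is_flow (ext_vec N) ([ffun p => (f p + hh N M p)%N] : flow_vec n).
Proof.
move=> H f [f0 df]; split.
  move=> i j ij; rewrite ffunE f0 // ffunE /=.
  by case: eqP => // E; rewrite -E ltnSn in ij.
move=> i.
under eq_bigr do rewrite ffunE PoszD.
under [X in _ - X = _]eq_bigr do rewrite ffunE PoszD.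
rewrite !big_split /= h_out h_in (ext_diff H) -(df i).
set a := \sum_(j < n.+1 | _) _; set b := \sum_(j < n.+1 | _) _.
set c := (if _ then _ else _); lia.
Qed.

Local Open Scope classical_set_scope.
Lemma card_le_aux (T : choiceType) (A B : set T) (G : T -> T) :
  injective G -> finite_set A -> finite_set B -> G @` A `<=` B ->
  (#|` fset_set A| <= #|` fset_set B|)%N.
Proof.
move=> Ginj finA finB sub.
have -> : #|` fset_set A| = #|` (G @` fset_set A)%fset| by rewrite card_imfset.
rewrite -fset_set_image //.
by apply: fsubset_leq_card; rewrite -fset_set_sub //; exact: finite_image.
Qed.

End Aux.

Theorem proposition2p8 (n : nat) (N M : 'I_n -> nat) :
  (forall k : 'I_n, \sum_(i < n | (i <= k)%N) M i <= \sum_(i < n | (i <= k)%N) N i) ->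
  K (ext_vec M) <= K (ext_vec N).
Proof.
move=> H; rewrite /K.
have finA := flow_finite (ext_vec M).
have finB := flow_finite (ext_vec N).
pose G := fun f : flow_vec n => ([ffun p => (f p + hh N M p)%N] : flow_vec n).
have Ginj : injective G.
  move=> f1 f2 E; apply/ffunP => p; have := congr1 (fun g : flow_vec n => g p) E.
  by rewrite /G !ffunE => /eqP; rewrite eqn_add2r => /eqP.
apply: (card_le_aux Ginj finA finB).
by move=> _ [f Af <-]; exact: g_flow.
Qed.
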